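(* Let $d\in\mathbb{N}$. Then $$\Pi=\bigcap_{\psi\in\mathcal{D}'}W(\psi),$$ where $\mathcal{D}'\subset\mathcal{D}$ consists of those functions in $\mathcal{D}$ all of whose values are reciprocals of natural numbers.
   Context: For $z\in\mathbb{R}^d$, $\|z\|$ denotes the sup-norm distance from $z$ to $\mathbb{Z}^d$. Write $\mathbb{N}=\{1,2,\dots\}$. For $\psi:\mathbb{N}\to\mathbb{R}_{\ge 0}$, let $W(\psi)$ be the set of pairs $(x,y)\in\mathbb{R}^d\times\mathbb{R}^d$ for which $\|nx+y\|<\psi(n)$ holds for infinitely many $n\in\mathbb{N}$. $\mathcal{D}$ is the set of all non-increasing $\psi:\mathbb{N}\to\mathbb{R}_{\ge0}$ with $\sum_n\psi(n)^d=\infty$, and $\Pi=\bigcap_{\psi\in\mathcal{D}}W(\psi)$. *)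

(* Defs.v *)
From HB Require Import structures.
From mathcomp Require Import all_boot all_order all_algebra.
From mathcomp Require Import all_classical all_reals all_analysis.
Set Implicit Arguments. Unset Strict Implicit. Unset Printing Implicit Defensive.
Import Order.TTheory GRing.Theory Num.Theory.
Local Open Scope classical_set_scope.
Local Open Scope ring_scope.

Definition zdist {R : realType} {d : nat} (z : 'I_d -> R) : R :=
  inf [set r : R | exists k : 'I_d -> int,
        r = \big[Num.max/0]_(i < d) `|z i - (k i)%:~R|].

(* psi : nat -> R; only the values at n >= 1 matter (domain N = {1,2,...}). *)
#[local] Unset Implicit Arguments.
Definition W {R : realType} (d : nat) (psi : nat -> R) : set (('I_d -> R) * ('I_d -> R)) :=
  [set p | forall N : nat, exists n : nat, (N < n)%N /\ (0 < n)%N /\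
      zdist (fun i => n%:R * p.1 i + p.2 i) < psi n].

#[local] Set Implicit Arguments.
Definition inD {R : realType} (d : nat) (psi : nat -> R) : Prop :=
  (forall n : nat, (0 < n)%N -> 0 <= psi n) /\
  (forall n m : nat, (0 < n)%N -> (n <= m)%N -> psi m <= psi n) /\
  (series (fun n : nat => psi n.+1 ^+ d) @ \oo --> +oo).

Definition inD' {R : realType} (d : nat) (psi : nat -> R) : Prop :=
  inD d psi /\
  (forall n : nat, (0 < n)%N -> exists m : nat, (0 < m)%N /\ psi n = (m%:R)^-1).

Definition Pi (R : realType) (d : nat) : set (('I_d -> R) * ('I_d -> R)) :=
  [set p | forall psi : nat -> R, inD d psi -> W d psi p].
Arguments Pi R d _ : clear implicits.

(* Main.v *)
Require Import Defs.
From HB Require Import structures.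
From mathcomp Require Import all_boot all_order all_algebra.
From mathcomp Require Import all_classical all_reals all_analysis.
Import Order.TTheory GRing.Theory Num.Theory.
Local Open Scope classical_set_scope.
Local Open Scope ring_scope.

Lemma inD_pos (R : realType) (d : nat) (hd : (0 < d)%N) (psi : nat -> R) :
  inD d psi -> forall n, (0 < n)%N -> 0 < psi n.
Proof.
move=> [H0 [Hm Hs]] n0 Hn0.
rewrite lt_neqAle H0 // andbT; apply/negP => /eqP E.
set f := fun n : nat => psi n.+1 ^+ d.
have fz : forall k, (n0 <= k.+1)%N -> f k = 0.
  move=> k Hk; rewrite /f.
  have : psi k.+1 = 0.
    by apply/eqP; rewrite eq_le H0 // E Hm.
  by move=> ->; rewrite expr0n (gtn_eqF hd).
have f0 : forall k, 0 <= f k by move=> k; rewrite /f exprn_ge0 // H0.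
have B : forall n, series f n <= series f n0.
  move=> n; rewrite /series /=.
  case: (leqP n n0) => Hn.
    rewrite (@big_cat_nat _ _ _ n 0 n0) //= lerDl.
    by apply: sumr_ge0 => k _.
  rewrite (@big_cat_nat _ _ _ n0 0 n) //= ?gerDl; last exact: ltnW.
  rewrite big1_seq //= => k; rewrite mem_index_iota => /andP [Hk _].
  by apply: fz; apply: leq_trans Hk _.
move: Hs => /cvgryPgt/(_ (series f n0)) [N _ HN].
have := HN N (leqnn N) => /=.
by rewrite ltNge B.
Qed.

Theorem lemma8 (R : realType) (d : nat) (hd : (0 < d)%N) :
  Pi R d = [set p | forall psi : nat -> R, inD' d psi -> W d psi p].
Proof.
apply/seteqP; split => p Hp psi Hpsi; first exact: Hp psi Hpsi.1.
have Hpos := @inD_pos R d hd psi Hpsi.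
case: Hpsi => [H0 [Hm Hs]].
pose T n := (Num.truncn (psi n)^-1).+1.
pose psi' n : R := (T n)%:R^-1.
have Tpos : forall n, (0 < (T n)%:R :> R) by move=> n; rewrite ltr0n.
have Tub : forall n, (0 < n)%N -> (psi n)^-1 < (T n)%:R.
  move=> n Hn; have hx : 0 <= (psi n)^-1 by rewrite invr_ge0 H0.
  have := truncn_itv hx.
  by case/andP.
have Tlb : forall n, (0 < n)%N -> (T n)%:R <= (psi n)^-1 + 1 :> R.
  move=> n Hn; have hx : 0 <= (psi n)^-1 by rewrite invr_ge0 H0.
  have := truncn_itv hx.
  by case/andP => H1 _; rewrite /T -addn1 natrD lerD2r.
have le1 : forall n, (0 < n)%N -> psi' n <= psi n.
  move=> n Hn; rewrite /psi' -[psi n]invrK lef_pV2 ?posrE ?invr_gt0 ?Hpos //.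
  exact: ltW (Tub n Hn).
set P := psi 1%N.
have P0 : 0 < P by apply: Hpos.
have lb : forall n, (0 < n)%N -> psi n / (1 + P) <= psi' n.
  move=> n Hn; rewrite ler_pdivrMr ?addr_gt0 // /psi'.
  have xp := Hpos n Hn.
  have h1 : psi n * (T n)%:R <= 1 + P.
    apply: le_trans (ler_wpM2l (ltW xp) (Tlb n Hn)) _.
    rewrite mulrDr mulfV ?gt_eqF // mulr1 lerD2l.
    by apply: Hm.
  by rewrite mulrC ler_pdivlMr.
have : W d psi' p.
  apply: Hp; split; last first.
    by move=> k Hk; exists (T k).
  split; first by move=> k _; rewrite invr_ge0 ler0n.
  split.
    move=> k m Hk Hkm; rewrite /psi' lef_pV2 ?posrE ?Tpos // ler_nat /T ltnS.
    apply: le_truncn; rewrite lef_pV2 ?posrE ?Hpos //; first exact: Hm.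
    exact: leq_trans Hkm.
  apply/cvgryPge => A.
  move: Hs => /cvgryPge/(_ (A * (1 + P) ^+ d)).
  apply: filterS => j /= Hj.
  have cp : 0 < (1 + P) ^+ d by apply: exprn_gt0; apply: addr_gt0.
  have : series (fun n : nat => psi n.+1 ^+ d) j / (1 + P) ^+ d
         <= series (fun n : nat => psi' n.+1 ^+ d) j.
    rewrite /series /= mulr_suml; apply: ler_sum => k _.
    rewrite -expr_div_n; apply: lerXn2r; rewrite ?nnegrE ?lb //.
    - by rewrite divr_ge0 // ?H0 // ltW // addr_gt0.
    - by rewrite /psi' invr_ge0 ler0n.
  move=> h; apply: le_trans h.
  by rewrite ler_pdivlMr.
move=> HW N; have [n [H1 [H2 H3]]] := HW N.
exists n; split => //; split => //.
by apply: lt_le_trans H3 (le1 n H2).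
Qed.
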